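(* Let $\Sigma$ be a closed oriented surface, $\mathbb T=\mathfrak t/\Lambda$ a compact torus and $K$ a nondegenerate symmetric bilinear form as below. For Lagrangians $L_1,L_2,L_3\subset H^1(\Sigma;\mathbb R)$ let $\mu_\Sigma(L_1,L_2,L_3)$ be their Maslov–Kashiwara index for the cup-product form $\omega_\Sigma$, and define $\mu_K(L_1,L_2,L_3):=\mu(\mathcal P_{L_1},\mathcal P_{L_2},\mathcal P_{L_3})$, the Maslov–Kashiwara index in $(H^1(\Sigma;\mathfrak t),\omega_{\Sigma,K})$ of $\mathcal P_{L_i}=L_i\otimes\mathfrak t$. Then $\mu_K(L_1,L_2,L_3)=\sigma(K)\,\mu_\Sigma(L_1,L_2,L_3)$, where $\sigma(K)$ is the signature of the real bilinear form $K$ on $\mathfrak t$.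
   Context: $K:\Lambda\times\Lambda\to\mathbb Z$ is even, integral, nondegenerate and symmetric, extended to $\mathfrak t$. $\omega_{\Sigma,K}([\alpha],[\beta])=\int_\Sigma K(\alpha\wedge\beta)$. For Lagrangians $V_1,V_2,V_3$ of a symplectic vector space $(V,\omega)$, the Maslov–Kashiwara index $\mu(V_1,V_2,V_3)$ is the signature of the quadratic form $Q(x_1,x_2,x_3)=\omega(x_1,x_2)+\omega(x_2,x_3)+\omega(x_3,x_1)$ on $V_1\oplus V_2\oplus V_3$. *)

(* Defs.v *)
From HB Require Import structures.
From mathcomp Require Import all_boot all_order all_algebra.
From mathcomp Require Import boolp reals.
Set Implicit Arguments. Unset Strict Implicit. Unset Printing Implicit Defensive.
Import Order.TTheory GRing.Theory Num.Theory.
Local Open Scope ring_scope.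

Section Defs.
Variable R : realType.

Definition pos_index (vT : vectType R) (D : vT -> Prop) (q : vT -> R) : nat :=
  \max_(k < (\dim (fullv : {vspace vT})).+1 |
        `[< exists U : {vspace vT}, \dim U = k /\
              (forall x, x \in U -> D x) /\
              (forall x, x \in U -> x != 0 -> 0 < q x) >]) k.

Definition signature (vT : vectType R) (D : vT -> Prop) (q : vT -> R) : int :=
  (pos_index D q)%:Z - (pos_index D (fun x => - q x))%:Z.

Definition maslov (vT : vectType R) (omega : vT -> vT -> R)
    (V1 V2 V3 : vT -> Prop) : int :=
  signature (fun x : vT * vT * vT => [/\ V1 x.1.1, V2 x.1.2 & V3 x.2])
    (fun x => omega x.1.1 x.1.2 + omega x.1.2 x.2 + omega x.2 x.1.1).

(* H^1(Sigma;R) of a closed oriented surface of genus g, in a symplectic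
   basis a_1..a_g, b_1..b_g, with the cup-product (intersection) form. *)
Definition H1 (g : nat) := 'rV[R]_(g + g).

Definition omegaSigma (g : nat) (a b : H1 g) : R :=
  \sum_(i < g) (a 0 (lshift g i) * b 0 (rshift g i)
                - a 0 (rshift g i) * b 0 (lshift g i)).

Definition lagrangian (g : nat) (L : {vspace H1 g}) : Prop :=
  (\dim L = g)%N /\ (forall x y, x \in L -> y \in L -> omegaSigma x y = 0).

(* t = R^r with lattice Lambda = Z^r; H^1(Sigma; t) = H^1(Sigma;R) (x) t,
   an element being the r-tuple (rows) of its components alpha_j along the
   basis e_j of Lambda. *)
Definition H1t (g r : nat) := 'M[R]_(r, g + g).

Definition Kreal (r : nat) (K : 'M[int]_r) : 'M[R]_r := map_mx (fun z => z%:~R) K.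

(* omega_{Sigma,K}(alpha, beta) = int_Sigma K(alpha /\ beta)
   = sum_{j,l} K(e_j,e_l) omega_Sigma(alpha_j, beta_l). *)
Definition omegaSigmaK (g r : nat) (K : 'M[int]_r) (X Y : H1t g r) : R :=
  \sum_(j < r) \sum_(l < r) Kreal K j l * omegaSigma (row j X) (row l Y).

Definition PL (g r : nat) (L : {vspace H1 g}) (X : H1t g r) : Prop :=
  forall j, row j X \in L.

Definition muSigma (g : nat) (L1 L2 L3 : {vspace H1 g}) : int :=
  maslov (@omegaSigma g) (fun x => x \in L1) (fun x => x \in L2) (fun x => x \in L3).

Definition muK (g r : nat) (K : 'M[int]_r) (L1 L2 L3 : {vspace H1 g}) : int :=
  maslov (@omegaSigmaK g r K) (@PL g r L1) (@PL g r L2) (@PL g r L3).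

Definition sigmaK (r : nat) (K : 'M[int]_r) : int :=
  signature (fun _ : 'rV[R]_r => True) (fun x => (x *m Kreal K *m x^T) 0 0).

End Defs.

(* Main.v *)
Require Import Defs.
From HB Require Import structures.
From mathcomp Require Import all_boot all_order all_algebra.
From mathcomp Require Import boolp reals.
From mathcomp Require Import ring lra.
Set Implicit Arguments. Unset Strict Implicit. Unset Printing Implicit Defensive.
Import Order.TTheory GRing.Theory Num.Theory.
Local Open Scope ring_scope.

Section General.
Variable R : realType.

Definition mkHom (aT rT : vectType R) (f : aT -> rT) (lf : linear f) : 'Hom(aT, rT) :=
  let fL : {linear aT -> rT} := HB.pack f (GRing.isLinear.Build _ _ _ _ f lf) in linfun fL.
Lemma mkHomE (aT rT : vectType R) (f : aT -> rT) (lf : linear f) x : mkHom lf x = f x.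
Proof. by rewrite /mkHom lfunE. Qed.

Lemma dimpair (v w : vectType R) : \dim {: (v * w)%type} = (\dim {:v} + \dim {:w})%N.
Proof. by rewrite !dimvf. Qed.
Lemma dimrv k : \dim {: 'rV[R]_k} = k.
Proof. by rewrite dimvf /dim /= mul1n. Qed.

Definition bilin (vT : vectType R) (b : vT -> vT -> R) :=
  (forall a x y z, b (a *: x + y) z = a * b x z + b y z) /\
  (forall a x y z, b z (a *: x + y) = a * b z x + b z y).
Definition linpred (vT : vectType R) (D : vT -> Prop) :=
  D 0 /\ forall a x y, D x -> D y -> D (a *: x + y).

Section OneSpace.
Variable vT : vectType R.

Lemma pos_index_ge (D : vT -> Prop) q (U : {vspace vT}) :
  (forall x, x \in U -> D x) -> (forall x, x \in U -> x != 0 -> 0 < q x) ->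
  (\dim U <= pos_index D q)%N.
Proof.
move=> hD hq; have hk : (\dim U < (\dim (fullv : {vspace vT})).+1)%N.
  by rewrite ltnS dimvS // subvf.
rewrite /pos_index; apply: (@leq_bigmax_cond _ _ _ (Ordinal hk)).
by apply/asboolP; exists U.
Qed.

Lemma pos_index_attained (D : vT -> Prop) q : D 0 -> exists U : {vspace vT},
  [/\ \dim U = pos_index D q, forall x, x \in U -> D x &
      forall x, x \in U -> x != 0 -> 0 < q x].
Proof.
move=> D0; rewrite /pos_index.
apply: (big_ind (fun k => exists U : {vspace vT}, [/\ \dim U = k, forall x, x \in U -> D x &
      forall x, x \in U -> x != 0 -> 0 < q x])).
- exists 0%VS; split; first by rewrite dimv0.
    by move=> x; rewrite memv0 => /eqP ->.
  by move=> x; rewrite memv0 => ->.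
- move=> x y hx hy; rewrite /maxn; by case: ifP.
- by move=> i /asboolP [U [hU [h1 h2]]]; exists U; split.
Qed.

Lemma pos_index_ub (D : vT -> Prop) q : D 0 -> (pos_index D q <= \dim {:vT})%N.
Proof. by move=> D0; have [U [<- _ _]] := pos_index_attained q D0; rewrite dimvS // subvf. Qed.

Lemma pos_index_le (wT : vectType R) (D : vT -> Prop) q (f : 'Hom(vT, wT)) : D 0 ->
  (forall x, D x -> f x = 0 -> q x <= 0) -> (pos_index D q <= \dim {:wT})%N.
Proof.
move=> D0 H; have [U [<- hD hq]] := pos_index_attained q D0.
rewrite -(@limg_dim_eq _ _ _ f U); first by rewrite dimvS // subvf.
apply/eqP; rewrite -subv0; apply/subvP => x /memv_capP [xU]; rewrite memv_ker => /eqP fx0.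
rewrite memv0; apply/negPn/negP => nx; have := hq x xU nx; have := H x (hD x xU) fx0.
by rewrite leNgt => /negP.
Qed.

Lemma pos_index_nonpos (D : vT -> Prop) q : D 0 ->
  (forall x, D x -> q x <= 0) -> pos_index D q = 0%N.
Proof.
move=> D0 H; apply/eqP; rewrite -leqn0.
have := @pos_index_le 'rV[R]_0 D q 0 D0 (fun x hx _ => H x hx).
by rewrite dimvf /dim /= muln0.
Qed.

Lemma pos_index_ext (D D' : vT -> Prop) q q' :
  (forall x, D x <-> D' x) -> (forall x, D x -> (0 < q x) = (0 < q' x)) ->
  pos_index D q = pos_index D' q'.
Proof.
move=> hD hq; rewrite /pos_index; apply: eq_bigl => k; apply: asbool_equiv_eq.
split=> -[U [h1 [h2 h3]]]; exists U; split => //; split => x xU.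
- by apply/hD; apply: h2.
- by move=> nx; rewrite -hq; [apply: h3 | apply: h2].
- by apply/hD; apply: h2.
- by move=> nx; rewrite hq; [apply: h3 | apply/hD; apply: h2].
Qed.

Section Bil.
Variable b : vT -> vT -> R.
Hypothesis hb : bilin b.
Variable D : vT -> Prop.
Hypothesis hD : linpred D.

Lemma b0l z : b 0 z = 0.
Proof. have := hb.1 1 0 0 z; rewrite scale1r addr0 mul1r; lra. Qed.
Lemma b0r z : b z 0 = 0.
Proof. have := hb.2 1 0 0 z; rewrite scale1r addr0 mul1r; lra. Qed.
Lemma bDl x y z : b (x + y) z = b x z + b y z.
Proof. by rewrite -[x]scale1r hb.1 mul1r scale1r. Qed.
Lemma bDr x y z : b z (x + y) = b z x + b z y.
Proof. by rewrite -[x]scale1r hb.2 mul1r scale1r. Qed.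
Lemma bZl a x z : b (a *: x) z = a * b x z.
Proof. by rewrite -[a *: x]addr0 hb.1 b0l addr0. Qed.
Lemma bZr a x z : b z (a *: x) = a * b z x.
Proof. by rewrite -[a *: x]addr0 hb.2 b0r addr0. Qed.
Lemma bsuml I (r : seq I) (P : pred I) (F : I -> vT) z :
  b (\sum_(i <- r | P i) F i) z = \sum_(i <- r | P i) b (F i) z.
Proof. exact: (big_morph (fun x => b x z) (fun x y => bDl x y z) (b0l z)). Qed.

Lemma exists_psi : exists P : {vspace vT},
  [/\ \dim P = pos_index D (fun x => b x x), forall x, x \in P -> D x,
      forall x, x \in P -> x != 0 -> 0 < b x x &
      exists f : 'Hom(vT, 'rV[R]_(\dim P)), forall x, D x -> f x = 0 -> b x x <= 0].
Proof.
have [P [dP PD Ppos]] := pos_index_attained (fun x => b x x) hD.1.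
exists P; split => //.
pose psi (x : vT) : 'rV[R]_(\dim P) :=
  \row_i (b (vbasis P)`_i x + b x (vbasis P)`_i).
have lpsi : linear psi.
  move=> a x y; apply/rowP => i; rewrite !mxE hb.1 hb.2; ring.
exists (mkHom lpsi) => x Dx; rewrite mkHomE => px0.
have orth : forall p, p \in P -> b p x + b x p = 0.
  move=> p pP; rewrite (coord_vbasis pP) bsuml.
  rewrite (big_morph (fun y => b x y) (fun y y' => bDr y y' x) (b0r x)).
  rewrite -big_split /=; apply: big1 => i _; rewrite bZl bZr -mulrDr.
  have := congr1 (fun m : 'rV[R]_(\dim P) => m 0 i) px0.
  by rewrite /= /psi !mxE => ->; rewrite mulr0.
rewrite leNgt; apply/negP => qx.
have xP : x \notin P.
  by apply/negP => xP; have := orth x xP; lra.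
have x0 : x != 0 by apply/negP => /eqP x0; move: qx; rewrite x0 b0l ltxx.
have hcap : (P :&: <[x]> = 0)%VS.
  apply/eqP; rewrite -subv0; apply/subvP => y /memv_capP [yP /vlineP [a ya]].
  rewrite memv0; case: (eqVneq a 0) => [a0|a0]; first by rewrite ya a0 scale0r.
  by move: xP; rewrite -[x](scalerK a0) -ya memvZ.
have hdim : \dim (P + <[x]>) = (\dim P).+1.
  by have := dimv_sum_cap P <[x]>; rewrite hcap dimv0 addn0 dim_vline x0 addn1.
suff : ((\dim P).+1 <= pos_index D (fun x => b x x))%N by rewrite -dP ltnn.
rewrite -hdim; apply: pos_index_ge.
  move=> y /memv_addP [p pP [z /vlineP [a ->] ->]].
  by rewrite addrC; apply: hD.2 => //; apply: PD.
move=> y /memv_addP [p pP [z /vlineP [a ->] ->]] ny.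
have e : b (p + a *: x) (p + a *: x) = b p p + a ^+ 2 * b x x + a * (b p x + b x p).
  rewrite !bDl !bDr !bZl !bZr; ring.
rewrite e orth // mulr0 addr0.
have hp : 0 <= b p p.
  case: (eqVneq p 0) => [->|pn]; first by rewrite b0l.
  by apply/ltW/Ppos.
case: (eqVneq a 0) => [a0|a0].
  move: ny; rewrite a0 scale0r addr0 => ny.
  by rewrite expr0n /= mul0r addr0; apply: Ppos.
have : 0 < a ^+ 2 by rewrite lt0r sqrf_eq0 a0 sqr_ge0.
nra.
Qed.

End Bil.
End OneSpace.

Lemma pos_index_iso_le (vT wT : vectType R) (D : vT -> Prop) q (D' : wT -> Prop) q'
  (f : 'Hom(vT, wT)) : D 0 -> (forall x, f x = 0 -> x = 0) ->
  (forall x, D x -> D' (f x)) -> (forall x, D x -> q' (f x) = q x) ->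
  (pos_index D q <= pos_index D' q')%N.
Proof.
move=> D0 finj hD hq; have [P [<- PD Ppos]] := pos_index_attained q D0.
rewrite -(@limg_dim_eq _ _ _ f P).
  apply: pos_index_ge => y /memv_imgP [p pP ->]; first by apply: hD; apply: PD.
  move=> fp0; rewrite hq; last by apply: PD.
  apply: Ppos => //; apply/negP => /eqP p0; move: fp0; by rewrite p0 linear0 eqxx.
apply/eqP; rewrite -subv0; apply/subvP => x /memv_capP [xP]; rewrite memv_ker => /eqP fx0.
by rewrite memv0 (finj _ fx0).
Qed.

Lemma pos_index_iso (vT wT : vectType R) (D : vT -> Prop) q (D' : wT -> Prop) q'
  (f : 'Hom(vT, wT)) (h : wT -> vT) : D 0 -> cancel f h -> cancel h f ->
  (forall x, D x <-> D' (f x)) -> (forall x, q x = q' (f x)) ->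
  pos_index D q = pos_index D' q'.
Proof.
move=> D0 hK fK hD hq.
have lh : linear h.
  by move=> a y z; rewrite -{1}(fK y) -{1}(fK z) -linearP hK.
apply/eqP; rewrite eqn_leq; apply/andP; split.
- apply: pos_index_iso_le => //.
  + by move=> x fx0; rewrite -(hK x) fx0 -(linear0 f) hK.
  + by move=> x /hD.
- apply: (pos_index_iso_le (f := mkHom lh)).
  + by rewrite -(linear0 f); apply/hD.
  + by move=> y; rewrite mkHomE => hy0; rewrite -(fK y) hy0 linear0.
  + by move=> y; rewrite mkHomE hD fK.
  + by move=> y _; rewrite mkHomE hq fK.
Qed.

Lemma pos_index_prod (vT1 vT2 : vectType R) (b1 : vT1 -> vT1 -> R) (b2 : vT2 -> vT2 -> R)
  (D1 : vT1 -> Prop) (D2 : vT2 -> Prop) :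
  bilin b1 -> bilin b2 -> linpred D1 -> linpred D2 ->
  pos_index (fun x : vT1 * vT2 => D1 x.1 /\ D2 x.2) (fun x => b1 x.1 x.1 + b2 x.2 x.2) =
  (pos_index D1 (fun x => b1 x x) + pos_index D2 (fun x => b2 x x))%N.
Proof.
move=> hb1 hb2 hD1 hD2.
have [P1 [dP1 P1D P1pos [f1 hf1]]] := exists_psi hb1 hD1.
have [P2 [dP2 P2D P2pos [f2 hf2]]] := exists_psi hb2 hD2.
have pD0 : (fun x : vT1 * vT2 => D1 x.1 /\ D2 x.2) 0 by split; [exact: hD1.1 | exact: hD2.1].
apply/eqP; rewrite eqn_leq; apply/andP; split.
  pose F (x : vT1 * vT2) := (f1 x.1, f2 x.2).
  have lF : linear F by move=> a x y; rewrite /F /= !linearP.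
  have := pos_index_le (D := fun x : vT1 * vT2 => D1 x.1 /\ D2 x.2) (q := fun x : vT1 * vT2 => b1 x.1 x.1 + b2 x.2 x.2) (f := mkHom lF) pD0.
  rewrite dimpair !dimrv -dP1 -dP2; apply.
  move=> x [Dx1 Dx2]; rewrite mkHomE /F => -[e1 e2].
  by have := hf1 _ Dx1 e1; have := hf2 _ Dx2 e2; lra.
pose il (x : vT1) : vT1 * vT2 := (x, 0).
pose ir (x : vT2) : vT1 * vT2 := (0, x).
have lil : linear il by move=> a x y; rewrite /il; congr (_, _) => /=; rewrite ?scaler0 ?addr0.
have lir : linear ir by move=> a x y; rewrite /ir; congr (_, _) => /=; rewrite ?scaler0 ?addr0.
pose U := (mkHom lil @: P1 + mkHom lir @: P2)%VS.
have d1 : \dim (mkHom lil @: P1) = \dim P1.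
  apply: limg_dim_eq; apply/eqP; rewrite -subv0; apply/subvP => x /memv_capP [_].
  by rewrite memv_ker mkHomE memv0 /il => /eqP [->].
have d2 : \dim (mkHom lir @: P2) = \dim P2.
  apply: limg_dim_eq; apply/eqP; rewrite -subv0; apply/subvP => x /memv_capP [_].
  by rewrite memv_ker mkHomE memv0 /ir => /eqP [->].
have dU : \dim U = (\dim P1 + \dim P2)%N.
  rewrite -d1 -d2 -dimv_sum_cap.
  suff -> : (mkHom lil @: P1 :&: mkHom lir @: P2 = 0)%VS by rewrite dimv0 addn0.
  apply/eqP; rewrite -subv0; apply/subvP => x /memv_capP [/memv_imgP [p1 _ ->]].
  move=> /memv_imgP [p2 _]; rewrite !mkHomE /il /ir => -[-> _].
  by rewrite memv0.
rewrite -dP1 -dP2 -dU; apply: pos_index_ge.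
  move=> x /memv_addP [u /memv_imgP [p1 p1P ->] [v /memv_imgP [p2 p2P ->] ->]].
  rewrite !mkHomE /il /ir /= addr0 add0r; split; [exact: P1D | exact: P2D].
move=> x /memv_addP [u /memv_imgP [p1 p1P ->] [v /memv_imgP [p2 p2P ->] ->]].
rewrite !mkHomE /il /ir /= addr0 add0r => nx.
have h1 : 0 <= b1 p1 p1.
  case: (eqVneq p1 0) => [->|n1]; [by rewrite b0l | exact/ltW/P1pos].
have h2 : 0 <= b2 p2 p2.
  case: (eqVneq p2 0) => [->|n2]; [by rewrite b0l | exact/ltW/P2pos].
case: (eqVneq p1 0) => [e1|n1]; last by have := P1pos _ p1P n1; lra.
case: (eqVneq p2 0) => [e2|n2]; last by have := P2pos _ p2P n2; lra.
move: nx; rewrite e1 e2 addr0 => /eqP H; exfalso; apply: H; reflexivity.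
Qed.


Lemma bilinN (vT : vectType R) (b : vT -> vT -> R) : bilin b -> bilin (fun x y => - b x y).
Proof. by move=> [h1 h2]; split=> a x y z; rewrite ?h1 ?h2; ring. Qed.
Lemma bilinZ (vT : vectType R) (c : R) (b : vT -> vT -> R) : bilin b -> bilin (fun x y => c * b x y).
Proof. by move=> [h1 h2]; split=> a x y z; rewrite ?h1 ?h2; ring. Qed.

Lemma signature_ext (vT : vectType R) (D D' : vT -> Prop) q q' :
  (forall x, D x <-> D' x) -> (forall x, q x = q' x) -> signature D q = signature D' q'.
Proof.
move=> hD hq; rewrite /signature (@pos_index_ext _ D D' q q') //; last by move=> x _; rewrite hq.
by rewrite (@pos_index_ext _ D D' (fun x => - q x) (fun x => - q' x)) // => x _; rewrite hq.
Qed.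

Lemma signature_zero (vT : vectType R) (D : vT -> Prop) q : D 0 -> (forall x, D x -> q x = 0) ->
  signature D q = 0.
Proof.
move=> D0 h; rewrite /signature !pos_index_nonpos // => x Dx; rewrite h // ?oppr0 //.
Qed.

Lemma signature_scale (vT : vectType R) (D : vT -> Prop) q c : D 0 ->
  signature D (fun x => c * q x) =
  (if 0 < c then signature D q else if c < 0 then - signature D q else 0).
Proof.
move=> D0; have [hc|hc|hc] := ltrgtP c 0.
- rewrite /signature opprB.
  rewrite (@pos_index_ext _ D D (fun x => c * q x) (fun x => - q x)) //.
    rewrite (@pos_index_ext _ D D (fun x => - (c * q x)) q) //.
    by move=> x _; rewrite -mulNr pmulr_rgt0 // oppr_gt0.
  by move=> x _; rewrite -[c * q x]mulrNN pmulr_rgt0 // oppr_gt0.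
- rewrite /signature (@pos_index_ext _ D D (fun x => c * q x) q) //.
    rewrite (@pos_index_ext _ D D (fun x => - (c * q x)) (fun x => - q x)) //.
    by move=> x _; rewrite -mulrN pmulr_rgt0.
  by move=> x _; rewrite pmulr_rgt0.
- by rewrite hc; apply: signature_zero => // x _; rewrite mul0r.
Qed.

Lemma signature_split (vT vT1 vT2 : vectType R) (D : vT -> Prop) q
  (b1 : vT1 -> vT1 -> R) (b2 : vT2 -> vT2 -> R) (D1 : vT1 -> Prop) (D2 : vT2 -> Prop)
  (f : 'Hom(vT, (vT1 * vT2)%type)) (h : vT1 * vT2 -> vT) :
  bilin b1 -> bilin b2 -> linpred D1 -> linpred D2 -> D 0 -> cancel f h -> cancel h f ->
  (forall x, D x <-> D1 (f x).1 /\ D2 (f x).2) ->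
  (forall x, q x = b1 (f x).1 (f x).1 + b2 (f x).2 (f x).2) ->
  signature D q = signature D1 (fun x => b1 x x) + signature D2 (fun x => b2 x x).
Proof.
move=> hb1 hb2 hD1 hD2 D0 hK fK hD hq; rewrite /signature.
rewrite (pos_index_iso (D' := fun y : vT1 * vT2 => D1 y.1 /\ D2 y.2)
   (q' := fun y => b1 y.1 y.1 + b2 y.2 y.2) D0 hK fK hD hq).
rewrite (pos_index_iso (D' := fun y : vT1 * vT2 => D1 y.1 /\ D2 y.2)
   (q' := fun y => (fun x y => - b1 x y) y.1 y.1 + (fun x y => - b2 x y) y.2 y.2) D0 hK fK hD);
  last by move=> x /=; rewrite hq opprD.
rewrite pos_index_prod // (pos_index_prod (bilinN hb1) (bilinN hb2) hD1 hD2).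
rewrite !PoszD; ring.
Qed.


Lemma signature_iso (vT wT : vectType R) (D : vT -> Prop) q (D' : wT -> Prop) q'
  (f : 'Hom(vT, wT)) (h : wT -> vT) : D 0 -> cancel f h -> cancel h f ->
  (forall x, D x <-> D' (f x)) -> (forall x, q x = q' (f x)) ->
  signature D q = signature D' q'.
Proof.
move=> D0 hK fK hD hq; rewrite /signature (pos_index_iso D0 hK fK hD hq).
by rewrite (pos_index_iso (q' := fun y => - q' y) D0 hK fK hD) // => x; rewrite hq.
Qed.

End General.

Section Conc.
Variable R : realType.
Variable g : nat.

Definition Jm : 'M[R]_(g + g) := block_mx 0 1%:M (- 1%:M) 0.

Lemma omegaSigmaJ (x y : H1 R g) : omegaSigma x y = (x *m Jm *m y^T) 0 0.
Proof.
have -> : x *m Jm = row_mx (- rsubmx x) (lsubmx x).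
  by rewrite -{1}[x]hsubmxK /Jm mul_row_block !mulmx0 !mulmxN !mulmx1 !add0r addr0.
rewrite -{2}[y]hsubmxK tr_row_mx mul_row_col mxE /omegaSigma.
rewrite !mxE addrC -big_split /=; apply: eq_bigr => i _; rewrite !mxE; ring.
Qed.

Definition omegaT r (A : 'M[R]_r) (X Y : 'M[R]_(r, g + g)) : R :=
  \tr (A^T *m X *m Jm *m Y^T).


Lemma mul_tr_entry m p k (M : 'M[R]_(m, k)) (N : 'M[R]_(p, k)) i j :
  (M *m N^T) i j = (row i M *m (row j N)^T) 0 0.
Proof. by rewrite !mxE; apply: eq_bigr => l _; rewrite !mxE. Qed.

Lemma omegaT_sum r (A : 'M[R]_r) X Y :
  omegaT A X Y = \sum_(j < r) \sum_(l < r) A j l * omegaSigma (row j X) (row l Y).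
Proof.
rewrite /omegaT -!mulmxA /mxtrace.
under eq_bigr do rewrite mxE.
rewrite exchange_big /=; apply: eq_bigr => j _; apply: eq_bigr => l _.
rewrite omegaSigmaJ; congr (_ * _); first by rewrite mxE.
by rewrite mulmxA (mul_tr_entry (X *m Jm)) row_mul.
Qed.

Lemma omegaSigmaK_T r (K : 'M[int]_r) X Y : omegaSigmaK K X Y = omegaT (Kreal R K) X Y.
Proof. by rewrite omegaT_sum. Qed.

Lemma bilin_omegaT r (A : 'M[R]_r) : bilin (omegaT A).
Proof.
split=> a X Y Z; rewrite /omegaT.
  by rewrite mulmxDr -scalemxAr !mulmxDl -!scalemxAl mxtraceD mxtraceZ.
by rewrite linearD linearZ /= mulmxDr -scalemxAr mxtraceD mxtraceZ.
Qed.

Lemma bilin_omegaS : bilin (@omegaSigma R g).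
Proof.
split=> a x y z; rewrite !omegaSigmaJ.
  by rewrite !mulmxDl -!scalemxAl !mxE.
by rewrite linearD linearZ /= mulmxDr -scalemxAr !mxE.
Qed.

Definition mb (vT : vectType R) (w : vT -> vT -> R) (x y : vT * vT * vT) : R :=
  w x.1.1 y.1.2 + w x.1.2 y.2 + w x.2 y.1.1.

Lemma bilin_mb (vT : vectType R) (w : vT -> vT -> R) : bilin w -> bilin (mb w).
Proof.
move=> [h1 h2]; split=> a x y z; rewrite /mb /= ?h1 ?h2; ring.
Qed.

Definition D3 (vT : vectType R) (V1 V2 V3 : vT -> Prop) (x : vT * vT * vT) : Prop :=
  [/\ V1 x.1.1, V2 x.1.2 & V3 x.2].

Lemma linpred_D3 (vT : vectType R) (V1 V2 V3 : vT -> Prop) :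
  linpred V1 -> linpred V2 -> linpred V3 -> linpred (D3 V1 V2 V3).
Proof.
move=> [a1 b1] [a2 b2] [a3 b3]; split; first by split.
by move=> a x y [? ? ?] [? ? ?]; split => /=; [apply: b1 | apply: b2 | apply: b3].
Qed.

Lemma linpred_mem (vT : vectType R) (L : {vspace vT}) : linpred (fun x => x \in L).
Proof. split; first exact: mem0v. by move=> a x y xL yL; rewrite memvD // memvZ. Qed.

Lemma linpred_PL r (L : {vspace H1 R g}) : linpred (@PL R g r L).
Proof.
split; first by move=> j; rewrite row0 mem0v.
by move=> a X Y hX hY j; rewrite linearD linearZ /= memvD // memvZ.
Qed.

End Conc.

Section Conc2.
Variable R : realType.
Variable g : nat.
Variables L1 L2 L3 : {vspace H1 R g}.

Definition DK r := D3 (@PL R g r L1) (@PL R g r L2) (@PL R g r L3).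
Definition QK r (A : 'M[R]_r) := fun x => mb (@omegaT R g r A) x x.
Definition sigR r (A : 'M[R]_r) :=
  signature (fun _ : 'rV[R]_r => True) (fun x => (x *m A *m x^T) 0 0).

Lemma PL_mul r s (C : 'M[R]_(s, r)) L X : PL L X -> @PL R g s L (C *m X).
Proof.
move=> hX j; rewrite row_mul mulmx_sum_row; apply: memv_suml => i _.
by rewrite memvZ.
Qed.

Lemma omegaT_change r s (M : 'M[R]_s) (B : 'M[R]_(s, r)) X Y :
  @omegaT R g s M (B *m X) (B *m Y) = @omegaT R g r (B^T *m M *m B) X Y.
Proof.
rewrite /omegaT trmx_mul !trmx_mul trmxK !mulmxA.
by rewrite mxtrace_mulC !mulmxA.
Qed.

Lemma sigK_iso r (A T : 'M[R]_r) : T \in unitmx ->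
  signature (@DK r) (QK A) = signature (@DK r) (QK (T *m A *m T^T)).
Proof.
move=> hT; pose B := (invmx T)^T.
pose f (X : 'M[R]_(r, g + g) * 'M[R]_(r, g + g) * 'M[R]_(r, g + g)) :=
  (B *m X.1.1, B *m X.1.2, B *m X.2).
pose h (X : 'M[R]_(r, g + g) * 'M[R]_(r, g + g) * 'M[R]_(r, g + g)) :=
  (T^T *m X.1.1, T^T *m X.1.2, T^T *m X.2).
have lf : linear f by move=> a X Y; rewrite /f /= !mulmxDr -!scalemxAr.
have e1 : T^T *m B = 1%:M by rewrite /B -trmx_mul mulVmx // trmx1.
have e2 : B *m T^T = 1%:M by rewrite /B -trmx_mul mulmxV // trmx1.
have e3 : B^T *m (T *m A *m T^T) *m B = A.
  by rewrite /B trmxK !mulmxA mulVmx // mul1mx -!mulmxA -trmx_mul mulVmx // trmx1 mulmx1.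
apply: (signature_iso (f := mkHom lf) (h := h)).
- by split; move=> j; rewrite row0 mem0v.
- by case=> [[X1 X2] X3]; rewrite mkHomE /f /h /= !mulmxA e1 !mul1mx.
- by case=> [[X1 X2] X3]; rewrite mkHomE /f /h /= !mulmxA e2 !mul1mx.
- case=> [[X1 X2] X3]; rewrite mkHomE /f /DK /D3 /=; split=> -[h1 h2 h3]; split;
    try (by apply: PL_mul).
  + by rewrite -[X1]mul1mx -e1 -mulmxA; apply: PL_mul.
  + by rewrite -[X2]mul1mx -e1 -mulmxA; apply: PL_mul.
  + by rewrite -[X3]mul1mx -e1 -mulmxA; apply: PL_mul.
- by case=> [[X1 X2] X3]; rewrite mkHomE /f /QK /mb /= !omegaT_change e3.
Qed.

End Conc2.

Section Conc3.
Variable R : realType.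

Lemma bilin_qf r (A : 'M[R]_r) : bilin (fun x y : 'rV[R]_r => (x *m A *m y^T) 0 0).
Proof.
split=> a x y z.
  by rewrite !mulmxDl -!scalemxAl !mxE.
by rewrite linearD linearZ /= mulmxDr -scalemxAr !mxE.
Qed.

Lemma sigR_iso r (A T : 'M[R]_r) : T \in unitmx -> sigR A = sigR (T *m A *m T^T).
Proof.
move=> hT; pose f (x : 'rV[R]_r) := x *m invmx T.
have lf : linear f by move=> a x y; rewrite /f mulmxDl scalemxAl.
apply: (signature_iso (f := mkHom lf) (h := fun y => y *m T)) => //.
- by move=> x; rewrite mkHomE /f -mulmxA mulVmx // mulmx1.
- by move=> x; rewrite mkHomE /f -mulmxA mulmxV // mulmx1.
- move=> x; rewrite mkHomE /f trmx_mul !mulmxA mulmxKV //.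
  have e : T^T *m (invmx T)^T = 1%:M by rewrite -trmx_mul mulVmx // trmx1.
  by rewrite -!mulmxA (mulmxA T^T) e mul1mx.
Qed.

Lemma sigR_zero r (A : 'M[R]_r) : (forall x : 'rV[R]_r, (x *m A *m x^T) 0 0 = 0) -> sigR A = 0.
Proof. by move=> h; apply: signature_zero. Qed.

Lemma sigR1 (d : R) : sigR (d%:M : 'M[R]_1) = if 0 < d then 1 else if d < 0 then -1 else 0.
Proof.
rewrite /sigR (@signature_ext _ _ _ (fun _ => True) (fun x : 'rV[R]_1 => (x *m d%:M *m x^T) 0 0) (fun x : 'rV[R]_1 => d * (x 0 0 * x 0 0))) //;
  last by move=> x; rewrite mul_mx_scalar -scalemxAl !mxE big_ord1 !mxE.
rewrite signature_scale //.
have -> : signature (fun _ : 'rV[R]_1 => True) (fun x => x 0 0 * x 0 0) = 1.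
  rewrite /signature (@pos_index_nonpos _ _ _ (fun x : 'rV[R]_1 => - (x 0 0 * x 0 0))) //;
    last by move=> x _; rewrite oppr_le0 -expr2 sqr_ge0.
  suff -> : pos_index (fun _ : 'rV[R]_1 => True) (fun x => x 0 0 * x 0 0) = 1%N by [].
  apply/eqP; rewrite eqn_leq; apply/andP; split.
    by rewrite -[X in (_ <= X)%N](dimrv R 1) pos_index_ub.
  rewrite -[X in (X <= _)%N](dimrv R 1); apply: pos_index_ge => // x _ nx.
  have : x 0 0 != 0.
    apply: contra nx => /eqP x0; apply/eqP/rowP => i; rewrite ord1 x0 mxE //.
  move=> h; rewrite lt0r mulf_eq0 negb_or h /= -expr2 sqr_ge0 //.
by [].
Qed.

End Conc3.

Section Conc4.
Variable R : realType.
Variable g : nat.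
Variables L1 L2 L3 : {vspace H1 R g}.

Lemma omegaT_block r (d : R) (C : 'M[R]_r) (X Y : 'M[R]_(1 + r, g + g)) :
  omegaT (block_mx d%:M 0 0 C) X Y =
  d * omegaSigma (usubmx X : H1 R g) (usubmx Y) + omegaT C (dsubmx X) (dsubmx Y).
Proof.
rewrite /omegaT -{1}[X]vsubmxK -{1}[Y]vsubmxK tr_block_mx !trmx0 tr_scalar_mx.
rewrite mul_block_col !mul0mx addr0 add0r mul_col_mx tr_col_mx mul_col_row mxtrace_block.
congr (_ + _); rewrite mul_scalar_mx -!scalemxAl omegaSigmaJ /mxtrace big_ord1 mxE //.
Qed.

Lemma PL_split r (L : {vspace H1 R g}) (X : 'M[R]_(1 + r, g + g)) :
  PL L X <-> (usubmx X : H1 R g) \in L /\ PL L (dsubmx X).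
Proof.
split.
  move=> h; split; last by move=> j; rewrite row_dsubmx.
  by rewrite -(row_id 0 (usubmx X)) row_usubmx.
move=> [h1 h2] j; rewrite -[X]vsubmxK; case: (split_ordP j) => k ->.
  by rewrite rowKu ord1 row_id.
by rewrite rowKd.
Qed.

Lemma sigK_split r (d : R) (C : 'M[R]_r) :
  signature (@DK R g L1 L2 L3 (1 + r)) (QK (block_mx d%:M 0 0 C)) =
  signature (D3 (fun x => x \in L1) (fun x => x \in L2) (fun x => x \in L3))
    (fun x => d * mb (@omegaSigma R g) x x) + signature (@DK R g L1 L2 L3 r) (QK C).
Proof.
pose M3 (m : nat) := ('M[R]_(m, g + g) * 'M[R]_(m, g + g) * 'M[R]_(m, g + g))%type.
pose f (X : M3 (1 + r)%N) : (H1 R g * H1 R g * H1 R g) * M3 r :=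
  ((usubmx X.1.1, usubmx X.1.2, usubmx X.2), (dsubmx X.1.1, dsubmx X.1.2, dsubmx X.2)).
pose h (Y : (H1 R g * H1 R g * H1 R g) * M3 r) : M3 (1 + r)%N :=
  (col_mx Y.1.1.1 Y.2.1.1, col_mx Y.1.1.2 Y.2.1.2, col_mx Y.1.2 Y.2.2).
have lf : linear f.
  move=> a X Y; rewrite /f /=.
  by rewrite !linearD !linearZ.
apply: (signature_split (b1 := fun x y => d * mb (@omegaSigma R g) x y)
   (b2 := mb (@omegaT R g r C)) (f := mkHom lf) (h := h)).
- exact/bilinZ/bilin_mb/bilin_omegaS.
- exact/bilin_mb/bilin_omegaT.
- by apply: linpred_D3; apply: linpred_mem.
- by apply: linpred_D3; apply: linpred_PL.
- by split; move=> j; rewrite row0 mem0v.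
- by case=> [[X1 X2] X3]; rewrite mkHomE /f /h /= !vsubmxK.
- by case=> [[[y1 y2] y3] [[Z1 Z2] Z3]]; rewrite mkHomE /f /h /= !col_mxKu !col_mxKd.
- case=> [[X1 X2] X3]; rewrite mkHomE /f /DK /D3 /=.
  split=> [[/PL_split [? ?] /PL_split [? ?] /PL_split [? ?]]|[[? ? ?] [? ? ?]]].
    by split; split.
  by split; apply/PL_split; split.
- by case=> [[X1 X2] X3]; rewrite mkHomE /f /QK /mb /= !omegaT_block; ring.
Qed.

Lemma sigR_split r (d : R) (C : 'M[R]_r) :
  sigR (block_mx (d%:M : 'M[R]_1) 0 0 C) = sigR (d%:M : 'M[R]_1) + sigR C.
Proof.
pose f (x : 'rV[R]_(1 + r)) : 'rV[R]_1 * 'rV[R]_r := (lsubmx x, rsubmx x).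
have lf : linear f by move=> a x y; rewrite /f !linearD !linearZ.
apply: (signature_split (b1 := fun x y : 'rV[R]_1 => (x *m d%:M *m y^T) 0 0)
   (b2 := fun x y : 'rV[R]_r => (x *m C *m y^T) 0 0) (f := mkHom lf)
   (h := fun y => row_mx y.1 y.2)).
- exact: bilin_qf.
- exact: bilin_qf.
- by split.
- by split.
- by [].
- by move=> x; rewrite mkHomE /f /= hsubmxK.
- by case=> [y1 y2]; rewrite mkHomE /f /= row_mxKl row_mxKr.
- by [].
- move=> x; rewrite mkHomE /f /= -{1}[x]hsubmxK mul_row_block !mulmx0 addr0 add0r.
  by rewrite -{3}[x]hsubmxK tr_row_mx mul_row_col mxE.
Qed.

End Conc4.

Section Conc5.
Variable R : realType.

Lemma qf_delta n (A : 'M[R]_n) i j : ((delta_mx 0 i : 'rV[R]_n) *m A *m (delta_mx 0 j : 'rV[R]_n)^T) 0 0 = A i j.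
Proof. by rewrite trmx_delta -rowE -colE !mxE. Qed.

Lemma exists_v n (A : 'M[R]_n) : A^T = A -> A != 0 ->
  exists v : 'rV[R]_n, (v *m A *m v^T) 0 0 != 0.
Proof.
move=> sA nA; have [//|H] := pselect (exists v : 'rV[R]_n, (v *m A *m v^T) 0 0 != 0).
case/negP: nA; apply/eqP/matrixP => i j; rewrite mxE.
have q0 : forall v : 'rV[R]_n, (v *m A *m v^T) 0 0 = 0.
  by move=> v; apply/eqP/negPn/negP => hv; apply: H; exists v.
have hb := bilin_qf A.
have := q0 ((delta_mx 0 i : 'rV[R]_n) + delta_mx 0 j).
rewrite (bDl hb) !(bDr hb) !q0 !qf_delta.
have -> : A j i = A i j by rewrite -{1}sA mxE.
lra.
Qed.

Lemma pid1 n : (pid_mx 1 : 'M[R]_(1, 1 + n)) = delta_mx 0 0.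
Proof. by apply/matrixP => i j; rewrite !mxE ord1 /= andbT eq_sym. Qed.

Lemma block_diag r (A : 'M[R]_(1 + r)) : A^T = A -> A != 0 ->
  exists T : 'M[R]_(1 + r), exists d : R, exists C : 'M[R]_r,
  [/\ T \in unitmx, d != 0, C^T = C & T *m A *m T^T = block_mx d%:M 0 0 C].
Proof.
move=> sA nA; have [v hv] := exists_v sA nA.
have v0 : v != 0 by apply: contra hv => /eqP ->; rewrite !mul0mx mxE.
pose T0 := row_ebase v.
have hT0 : T0 \in unitmx by apply: row_ebase_unit.
have ev : v = (col_ebase v 0 0) *: row 0 T0.
  have := mulmx_ebase v; rewrite rank_rV v0 /= pid1 -mulmxA -rowE.
  by rewrite {1}[col_ebase v]mx11_scalar mul_scalar_mx => ->.
pose w := row 0 T0.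
have hw : (w *m A *m w^T) 0 0 != 0.
  apply: contra hv => /eqP hw0; rewrite ev linearZ /= -!scalemxAl -scalemxAr.
  have sc : forall (c : R) (M : 'M[R]_1), (c *: M) 0 0 = c * M 0 0 by move=> c M; rewrite mxE.
  by rewrite !sc -/w hw0 !mulr0.
pose K1 := T0 *m A *m T0^T.
have sK1 : K1^T = K1 by rewrite /K1 !trmx_mul trmxK sA mulmxA.
pose d := K1 0 0.
have hd : d = (w *m A *m w^T) 0 0 by rewrite /d /K1 mul_tr_entry row_mul.
have d0 : d != 0 by rewrite hd.
pose ur := ursubmx K1; pose dl := dlsubmx K1; pose dr := drsubmx K1.
have ha : ulsubmx K1 = d%:M.
  rewrite [ulsubmx K1]mx11_scalar mxE; congr (_%:M).
  by rewrite mxE /d; congr (K1 _ _); apply/val_inj.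
have hdl : dl^T = ur by rewrite /dl trmx_dlsub sK1.
have hur : ur^T = dl by rewrite -hdl trmxK.
have hdr : dr^T = dr by rewrite /dr trmx_drsub sK1.
pose E : 'M[R]_(1 + r) := block_mx 1%:M 0 (- (d^-1 *: dl)) 1%:M.
have hE : E \in unitmx by rewrite unitmxE det_lblock !det1 mulr1 unitr1.
pose C := dr - d^-1 *: (dl *m ur).
exists (E *m T0), d, C; split => //.
- by rewrite unitmx_mul hE.
- by rewrite /C linearB linearZ /= trmx_mul hdr hdl hur.
have -> : E *m T0 *m A *m (E *m T0)^T = E *m K1 *m E^T.
  by rewrite /K1 trmx_mul !mulmxA.
rewrite -[K1]submxK ha -/ur -/dl -/dr /E tr_block_mx !trmx0 tr_scalar_mx !mulmx_block.
rewrite !mul1mx !mul0mx !mulmx1 !mulmx0 ?addr0 ?add0r !tr_scalar_mx !mulmx1.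
have e1 : - (d^-1 *: dl) *m d%:M + dl = 0.
  by rewrite mul_mx_scalar scalerN scalerA mulfV // scale1r addNr.
rewrite e1 mul0mx add0r.
congr block_mx.
- by rewrite mul_scalar_mx linearN linearZ /= hdl scalerN scalerA mulfV // scale1r addNr.
- by rewrite /C mulNmx -scalemxAl addrC.
Qed.

End Conc5.

Lemma main_ind (R : realType) (g : nat) (L1 L2 L3 : {vspace H1 R g}) r (A : 'M[R]_r) :
  A^T = A ->
  signature (@DK R g L1 L2 L3 r) (QK A) =
  sigR A * signature (D3 (fun x => x \in L1) (fun x => x \in L2) (fun x => x \in L3))
    (fun x => mb (@omegaSigma R g) x x).
Proof.
have DK0 : forall r, @DK R g L1 L2 L3 r 0 by move=> r'; split; move=> j; rewrite row0 mem0v.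
elim: r A => [|r IH] A sA.
  rewrite signature_zero //; last by move=> x _; rewrite /QK /mb /omegaT /mxtrace !big_ord0 !addr0.
  rewrite sigR_zero ?mul0r // => x; rewrite (thinmx0 x) !mul0mx mxE.
  by [].
have [->|nA] := eqVneq A 0.
  rewrite signature_zero //; last by move=> x _; rewrite /QK /mb /omegaT !trmx0 !mul0mx mxtrace0 !addr0.
  by rewrite sigR_zero ?mul0r // => x; rewrite mulmx0 mul0mx mxE.
have [T [d [C [hT d0 sC eM]]]] := @block_diag R r A sA nA.
rewrite (sigK_iso _ _ _ _ hT) eM sigK_split (sigR_iso _ hT) eM sigR_split sigR1 IH //.
rewrite signature_scale; last by split; apply: mem0v.
by case: ltrgtP => _; ring.
Qed.

Theorem lemma2p19 (R : realType) (g r : nat) (K : 'M[int]_r)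
  (Ksym : K^T = K)
  (Keven : forall i : 'I_r, (2 %| K i i)%Z)
  (Knondeg : \det K != 0)
  (L1 L2 L3 : {vspace H1 R g})
  (hL1 : lagrangian L1) (hL2 : lagrangian L2) (hL3 : lagrangian L3) :
  muK K L1 L2 L3 = sigmaK R K * muSigma L1 L2 L3.
Proof.
have sK : (Kreal R K)^T = Kreal R K by rewrite /Kreal map_trmx Ksym.
have := main_ind L1 L2 L3 sK.
rewrite /muK /maslov /sigmaK /muSigma /maslov => <-.
apply: signature_ext => // x; rewrite /QK /mb !omegaSigmaK_T //.
Qed.
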